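(* Let $\mathbb{G}$ be the bouquet described as follows: on the boundary circle of its vertex choose $14$ points $p_0,p_1,\dots,p_{13}$ in cyclic order; $\mathbb{G}$ has three non-orientable loops with ends at $\{p_1,p_6\}$, $\{p_2,p_9\}$, $\{p_5,p_{12}\}$ and four orientable loops with ends at $\{p_0,p_3\}$, $\{p_4,p_7\}$, $\{p_8,p_{11}\}$, $\{p_{10},p_{13}\}$. Then $\mathbb{G}$ is not pseudo-orientable, and its quasi-tree generating polynomial $p_{\mathbb{G}}=\sum_Q\prod_{e\in Q}x_e$ (sum over quasi-trees $Q$) is Hurwitz stable.
   Context: A bouquet is a ribbon graph with a single vertex disc $v$ and loops attached along pairs of disjoint segments (ends) of the boundary of $v$. A loop $e$ is orientable if $v\cup e$ is an annulus and non-orientable if it is a Möbius band. A quasi-tree is a set $Q$ of loops such that $v$ together with the loops in $Q$ has exactly one boundary component. A bouquet is pseudo-orientable if its vertex boundary circle is the union of two closed arcs $S_1,S_2$ meeting in exactly two points such that both ends of each orientable loop lie in the interior of one $S_i$ and each non-orientable loop has one end in the interior of each of $S_1,S_2$. A polynomial $f\in\mathbb{C}[z_1,\dots,z_n]$ is Hurwitz stable if $f\ne0$ whenever $\mathrm{Re}(z_i)>0$ for all $i$. *)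

(* Defs.v *)
From mathcomp Require Import all_boot all_algebra.
From mathcomp Require Import Rstruct.
From mathcomp Require Import complex.
From mathcomp Require Import mpoly.
Set Implicit Arguments. Unset Strict Implicit. Unset Printing Implicit Defensive.
Import GRing.Theory Num.Theory.
Local Open Scope ring_scope.

Definition C : numClosedFieldType := complex Rdefinitions.R.

(* Bouquets as signed chord diagrams.                                      *)
(* The boundary circle of the vertex carries N marked points p_0..p_{N-1}   *)
(* in cyclic order (type 'I_N, successor = ordS).  There are m loops       *)
(* (type 'I_m); loop e has its two ends at the points end1 e, end2 e and   *)
(* ori e = true iff e is orientable (v u e an annulus), false iff it is    *)
(* non-orientable (v u e a Moebius band).                                  *)
Record bouquet := Bouquet {
  npts  : nat;
  nloops : nat;
  end1 : 'I_nloops -> 'I_npts;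
  end2 : 'I_nloops -> 'I_npts;
  ori  : 'I_nloops -> bool }.

(* Boundary of the ribbon subgraph v u Q.  Each marked point x has two     *)
(* "corners" (x,false) (just before x) and (x,true) (just after x).  The   *)
(* boundary of v u Q is the union of:                                      *)
(*  - the vertex arcs from (x,true) to (ordS x,false);                     *)
(*  - for x not an end of a loop of Q, the passage (x,false)--(x,true);    *)
(*  - for a loop e in Q with ends y,y': its two boundary sides, joining    *)
(*    (y,false)--(y',true), (y,true)--(y',false) if e is orientable and    *)
(*    (y,false)--(y',false), (y,true)--(y',true) if e is non-orientable.   *)
(* Every corner has degree 2, so the boundary components of v u Q are the  *)
(* connected components of this graph.                                     *)
Section Boundary.
Variable G : bouquet.
Local Notation N := (npts G).
Local Notation m := (nloops G).

Definition corner := ('I_N * bool)%type.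

Definition is_end_in (Q : {set 'I_m}) (x : 'I_N) : bool :=
  [exists e in Q, (@end1 G e == x) || (@end2 G e == x)].

Definition ribbon_side (e : 'I_m) (c d : corner) : bool :=
  [exists b : bool,
     (c == (@end1 G e, b)) && (d == (@end2 G e, if @ori G e then ~~ b else b))].

Definition bdry_adj0 (Q : {set 'I_m}) (c d : corner) : bool :=
  [|| (c.2 && ~~ d.2 && (d.1 == ordS c.1)),
      (~~ is_end_in Q c.1 && (d.1 == c.1) && ~~ c.2 && d.2)
    | [exists e in Q, ribbon_side e c d]].

Definition bdry_adj (Q : {set 'I_m}) : rel corner :=
  fun c d => bdry_adj0 Q c d || bdry_adj0 Q d c.

Definition nbdry (Q : {set 'I_m}) : nat := n_comp (bdry_adj Q) predT.

Definition quasi_tree (Q : {set 'I_m}) : bool := nbdry Q == 1%N.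

(* Pseudo-orientability.  The two points where S1 and S2 meet cannot be   *)
(* ends (every end must be interior to S1 or S2), so each lies in a gap    *)
(* between consecutive marked points; we encode the gap just before p_a by *)
(* a : 'I_N.  With cuts before p_a and before p_b, S1 contains the points *)
(* p_a, p_{a+1}, ..., p_{b-1} (cyclically), S2 the others.                 *)
Definition in_S1 (a b x : 'I_N) : bool :=
  if (a <= b)%N then ((a <= x) && (x < b))%N else ((a <= x) || (x < b))%N.

Definition pseudo_orientable : Prop :=
  exists a b : 'I_N, forall e : 'I_m,
    if @ori G e then in_S1 a b (@end1 G e) == in_S1 a b (@end2 G e)
    else in_S1 a b (@end1 G e) != in_S1 a b (@end2 G e).

Definition qt_poly : {mpoly C[m]} :=
  \sum_(Q : {set 'I_m} | quasi_tree Q) \prod_(e in Q) 'X_e.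

End Boundary.

Definition hurwitz_stable (n : nat) (f : {mpoly C[n]}) : Prop :=
  forall z : 'I_n -> C, (forall i, 0 < 'Re (z i)) -> f.@[z] != 0.

Definition G59_end1 (e : 'I_7) : 'I_14 := inord (nth 0%N [:: 1; 2; 5; 0; 4; 8; 10]%N e).
Definition G59_end2 (e : 'I_7) : 'I_14 := inord (nth 0%N [:: 6; 9; 12; 3; 7; 11; 13]%N e).
Definition G59_ori (e : 'I_7) : bool := (3 <= e)%N.

Definition G59 : bouquet := @Bouquet 14 7 G59_end1 G59_end2 G59_ori.

(* Main.v *)
Require Import Defs.
From mathcomp Require Import all_boot all_algebra.
From mathcomp Require Import mpoly.
From Stdlib Require Import FunctionalExtensionality.
From mathcomp Require Import perm order ring.
From mathcomp Require Import Rstruct complex.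
Import Order.TTheory GRing.Theory Num.Theory.

Definition ordl n : seq 'I_n.+1 := [seq Ordinal (ltn_pmod i (ltn0Sn n)) | i <- iota 0 n.+1].
Definition cl : seq ('I_14 * bool) := [seq (x, b) | x <- ordl 13, b <- [:: true; false]].
Definition e1n := [:: 1; 2; 5; 0; 4; 8; 10]%N.
Definition e2n := [:: 6; 9; 12; 3; 7; 11; 13]%N.
Definition is_end_m (o : seq 'I_7) (s : seq bool) (x : nat) : bool :=
  has (fun e : 'I_7 => nth false s e && ((nth 0%N e1n e == x) || (nth 0%N e2n e == x))) o.
Definition rs_m (e : 'I_7) (c d : 'I_14 * bool) : bool :=
  [&& (val c.1 == nth 0%N e1n e), (val d.1 == nth 0%N e2n e) & (d.2 == if (3 <= e)%N then ~~ c.2 else c.2)].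
Definition adj0_m o s (c d : 'I_14 * bool) : bool :=
  [|| c.2 && ~~ d.2 && (val d.1 == (val c.1).+1 %% 14)%N,
      ~~ is_end_m o s (val c.1) && (val d.1 == val c.1) && ~~ c.2 && d.2
    | has (fun e : 'I_7 => nth false s e && rs_m e c d) o].
Definition adj_m o s : rel ('I_14 * bool) := fun c d => adj0_m o s c d || adj0_m o s d c.
Definition ncomp_tbl (c : seq ('I_14 * bool)) (tbl : seq (seq ('I_14 * bool))) : nat :=
  count (fun x => let D := dfs (fun y => nth [::] tbl (index y c)) 28 [::] x in
                  odflt x (ohead (filter (fun y => y \in D) c)) == x) c.
Definition my_qt s := let o := ordl 6 in let c := cl in
  let tbl := [seq filter (adj_m o s x) c | x <- c] in ncomp_tbl c tbl == 1%N.
Definition Mrows : seq (seq int) :=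
  [:: [:: 1; 1; 1; 1; 1; 0; 0]; [:: 1; 1; 1; 1; 0; 1; 0]; [:: 1; 1; 1; 0; 1; 0; 1];
      [:: -1; -1; 0; 0; 0; 0; 0]; [:: -1; 0; -1; 0; 0; 0; 0]; [:: 0; -1; 0; 0; 0; 0; 1];
      [:: 0; 0; -1; 0; 0; -1; 0]]%R.
Definition Mint (i j : nat) : int := nth 0%R (nth [::] Mrows i) j.

Section DetF.
Variable R : nzRingType.
Fixpoint sumF (k : nat) (f : nat -> R) : R := if k is k'.+1 then (sumF k' f + f k')%R else 0%R.
Fixpoint detF (n : nat) (A : nat -> nat -> R) : R :=
  if n is n'.+1 then sumF n (fun j => (-1) ^+ j * A 0%N j * detF n' (fun i k => A i.+1 (bump j k)))%R
  else 1%R.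
End DetF.
Arguments sumF {R}.
Arguments detF {R}.

Definition leafI (s : seq bool) (i j : nat) : int := if nth false s i then Mint i j else ((i == j) : int).
Fixpoint allb n : seq (seq bool) := if n is n'.+1 then [seq b :: t | b <- [:: true; false], t <- allb n'] else [:: [::]].

Lemma ordlE n : ordl n = enum 'I_n.+1.
Proof.
apply: (inj_map val_inj); rewrite val_enum_ord /ordl -map_comp.
rewrite -[RHS]map_id; apply/eq_in_map => i; rewrite mem_iota /= => Hi.
by rewrite modn_small.
Qed.

Lemma Ecl : Finite.enum (prod (ordinal 14) bool) = cl.
Proof. by rewrite unlock /= /prod_enum /cl !ordlE !enumT !unlock. Qed.

Lemma mem_cl y : y \in cl.
Proof. by rewrite -Ecl -enumT mem_enum. Qed.

Lemma ncompE (e : rel ('I_14 * bool)) :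
  n_comp e predT = ncomp_tbl cl [seq filter (e x) cl | x <- cl].
Proof.
have gE : (fun y => nth [::] [seq filter (e x) cl | x <- cl] (index y cl)) = (fun y => filter (e y) cl).
  apply: functional_extensionality => y.
  by rewrite (nth_map y) ?index_mem ?mem_cl // nth_index ?mem_cl.
rewrite /ncomp_tbl gE /n_comp_mem cardE /enum_mem Ecl size_filter.
apply: eq_count => x; rewrite !inE andbT.
rewrite /roots /fingraph.root /pick /enum_mem Ecl /connect /rgraph /enum_mem.
rewrite Ecl card_prod card_ord card_bool.
reflexivity.
Qed.

Definition maskJ (Q : {set 'I_7}) : seq bool := [seq i \in Q | i <- enum 'I_7].
Lemma nth_maskJ Q (i : 'I_7) : nth false (maskJ Q) i = (i \in Q).
Proof. by rewrite (nth_map i) ?size_enum_ord ?nth_ord_enum. Qed.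

Lemma end1E (e : 'I_7) : nat_of_ord (G59_end1 e) = nth 0%N e1n e.
Proof. by rewrite /G59_end1 inordK //; case: e => [[|[|[|[|[|[|[|]]]]]]]]. Qed.
Lemma end2E (e : 'I_7) : nat_of_ord (G59_end2 e) = nth 0%N e2n e.
Proof. by rewrite /G59_end2 inordK //; case: e => [[|[|[|[|[|[|[|]]]]]]]]. Qed.

Lemma existsE7 (P : pred 'I_7) : [exists e, P e] = has P (ordl 6).
Proof.
rewrite ordlE; apply/existsP/hasP => [[e He]|[e _ He]]; last by exists e.
by exists e; rewrite ?mem_enum.
Qed.

Lemma existsb (P : pred bool) : [exists b, P b] = P true || P false.
Proof. by apply/existsP/orP => [[[] H]|[H|H]]; [left|right|exists true|exists false]. Qed.

Lemma rsE (e : 'I_7) (c d : 'I_14 * bool) : @ribbon_side G59 e c d = rs_m e c d.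
Proof.
case: c => c1 c2; case: d => d1 d2.
rewrite /ribbon_side /rs_m existsb !xpair_eqE -!val_eqE /= end1E end2E /G59_ori.
by case: c2; case: d2; case: (2 < e)%N; case: (c1 == _ :> nat); case: (d1 == _ :> nat).
Qed.

Lemma is_endE (Q : {set 'I_7}) (x : 'I_14) : @is_end_in G59 Q x = is_end_m (ordl 6) (maskJ Q) x.
Proof.
rewrite /is_end_in existsE7; apply: eq_has => e.
by rewrite nth_maskJ -!val_eqE /= end1E end2E.
Qed.

Lemma adj0E (Q : {set 'I_7}) c d : @bdry_adj0 G59 Q c d = adj0_m (ordl 6) (maskJ Q) c d.
Proof.
rewrite /bdry_adj0 /adj0_m is_endE existsE7.
congr [|| _, _ | _].
by apply: eq_has => e; rewrite nth_maskJ rsE.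
Qed.

Lemma qtE (Q : {set 'I_7}) : @quasi_tree G59 Q = my_qt (maskJ Q).
Proof.
rewrite /quasi_tree /nbdry.
rewrite (@eq_n_comp _ _ (adj_m (ordl 6) (maskJ Q))); last first.
  by apply: eq_connect => c d; rewrite /bdry_adj /adj_m !adj0E.
by rewrite ncompE.
Qed.

Lemma check1 : all (fun s => @detF int 7 (leafI s) == (my_qt s : int)) (allb 7).
Proof. vm_cast_no_check (erefl true). Qed.

Local Open Scope ring_scope.

Lemma sumFE (R : nzRingType) k (f : nat -> R) : sumF k f = \sum_(j < k) f j.
Proof. by elim: k => [|k IH] /=; rewrite ?big_ord0 // big_ord_recr IH. Qed.

Lemma eq_sumF (R : nzRingType) k (f g : nat -> R) : (forall j, f j = g j) -> sumF k f = sumF k g.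
Proof. by move=> H; elim: k => [|k IH] //=; rewrite IH H. Qed.

Lemma detFS (R : nzRingType) n (A : nat -> nat -> R) : detF n.+1 A =
  sumF n.+1 (fun j => (-1) ^+ j * A 0%N j * detF n (fun i k => A i.+1 (bump j k))).
Proof. by []. Qed.

Lemma detF_det (R : comNzRingType) n (A : 'M[R]_n) (F : nat -> nat -> R) :
  (forall i j : 'I_n, A i j = F i j) -> \det A = detF n F.
Proof.
elim: n A F => [|n IH] A F HA; first by rewrite det_mx00.
rewrite (expand_det_row A ord0) detFS sumFE; apply: eq_bigr => j _.
rewrite /cofactor HA (IH _ (fun i k => F i.+1 (bump j k))) ?add0n.
  by rewrite mulrCA mulrA.
by move=> i k; rewrite !mxE HA lift0.
Qed.

Lemma detF_map (R S : nzRingType) (f : {rmorphism R -> S}) n (F : nat -> nat -> R) :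
  f (detF n F) = detF n (fun i j => f (F i j)).
Proof.
elim: n F => [|n IH] F; first by rewrite /= rmorph1.
have sumF_map k g : f (sumF k g) = sumF k (fun j => f (g j)).
  by elim: k => [|k IHk] /=; rewrite ?rmorph0 // rmorphD IHk.
rewrite !detFS sumF_map; apply: eq_sumF => j.
by rewrite !rmorphM rmorphXn rmorphN1 IH.
Qed.

Lemma allb_mem n s : size s = n -> s \in allb n.
Proof.
elim: n s => [|n IH] [|b s] //= [Hs].
by case: b; rewrite /= !mem_cat ?(map_f, IH) ?orbT.
Qed.

Lemma size_maskJ Q : size (maskJ Q) = 7%N.
Proof. by rewrite size_map size_enum_ord. Qed.

Definition Mc : 'M[C]_7 := \matrix_(i, j) (Mint i j)%:~R.
Definition leafC (Q : {set 'I_7}) : 'M[C]_7 :=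
  \matrix_(i, j) (if i \in Q then Mc i j else (i == j)%:R).

Lemma detleaf (Q : {set 'I_7}) : \det (leafC Q) = (@quasi_tree G59 Q)%:R.
Proof.
rewrite (@detF_det _ _ _ (fun i j => (leafI (maskJ Q) i j)%:~R)); last first.
  move=> i j; rewrite !mxE /leafI nth_maskJ; case: (i \in Q) => //.
rewrite -(@detF_map _ _ (intr : {rmorphism int -> C})).
have := allP check1 (maskJ Q) (allb_mem _ _ (size_maskJ Q)).
by move/eqP => ->; rewrite qtE; case: (my_qt _).
Qed.

Lemma detExp (R : comNzRingType) n (z : 'I_n -> R) (M : 'M[R]_n) :
  \det (\matrix_(i, j) ((i == j)%:R + z i * M i j)) =
  \sum_(J : {set 'I_n}) (\prod_(i in J) z i) *
     \det (\matrix_(i, j) (if i \in J then M i j else (i == j)%:R)).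
Proof.
rewrite [LHS]/determinant.
transitivity (\sum_(s : 'S_n) \sum_(J : {set 'I_n}) (-1) ^+ s *
   ((\prod_(i in J) z i) * \prod_i (if i \in J then M i (s i) else (i == s i)%:R))).
  apply: eq_bigr => s _; rewrite -mulr_sumr; congr (_ * _).
  rewrite (eq_bigr (fun i => (z i * M i (s i)) + (i == s i)%:R)); last first.
    by move=> i _; rewrite mxE addrC.
  rewrite bigA_distr; apply: eq_bigr => J _.
  rewrite [\prod_(i in J) _]big_mkcond -big_split /=; apply: eq_bigr => i _.
  by case: (i \in J); rewrite ?mul1r.
rewrite exchange_big; apply: eq_bigr => J _.
rewrite /determinant mulr_sumr; apply: eq_bigr => s _.
rewrite mulrCA; congr (_ * (_ * _)); apply: eq_bigr => i _; by rewrite mxE.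
Qed.

Lemma MsymI_all : all (fun i => all (fun j => Mint i j + Mint j i ==
   2 * (((i < 3)%N : int) * ((j < 3)%N : int))) (iota 0 7)) (iota 0 7).
Proof. by []. Qed.

Definition acoef (i : 'I_7) : C := (((i < 3)%N : int))%:~R.

Lemma Msym (i j : 'I_7) : Mc i j + Mc j i = 2 * (acoef i * acoef j).
Proof.
have := allP MsymI_all i; rewrite mem_iota ltn_ord => /(_ isT) /allP /(_ j).
rewrite mem_iota ltn_ord => /(_ isT) /eqP H.
by rewrite !mxE -intrD H intrM intrM.
Qed.

Lemma conjMc i j : (Mc i j)^* = Mc i j.
Proof. by rewrite mxE rmorph_int. Qed.
Lemma conja i : (acoef i)^* = acoef i.
Proof. by rewrite rmorph_int. Qed.

Lemma sum_delta (R : comNzRingType) n (v : 'I_n -> R) (j : 'I_n) : \sum_(i < n) v i * (i == j)%:R = v j.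
Proof.
rewrite (bigD1 j) //= eqxx mulr1 big1 ?addr0 // => i /negbTE ->. by rewrite mulr0.
Qed.

Lemma stab (z : 'I_7 -> C) : (forall i, 0 < 'Re (z i)) ->
  \det (\matrix_(i, j) ((i == j)%:R + z i * Mc i j)) != 0.
Proof.
move=> Hz; apply/negP => H0.
have [v v0 Hv] : exists2 v : 'rV[C]_7, v != 0 & v *m (\matrix_(i, j) ((i == j)%:R + z i * Mc i j)) = 0.
  by apply/det0P.
pose u i := v 0 i * z i.
have Hj : forall j, v 0 j + \sum_i u i * Mc i j = 0.
  move=> j; move/matrixP: Hv => /(_ 0 j); rewrite !mxE => H; apply: (etrans _ H).
  under [RHS]eq_bigr do rewrite mxE mulrDr mulrA.
  rewrite big_split /=. by rewrite (@sum_delta C _ (fun i => v 0 i)).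
pose T := \sum_j \sum_i (u j)^* * u i * Mc i j.
have S0 : \sum_j (u j)^* * v 0 j + T = 0.
  have E : \sum_j (u j)^* * (v 0 j + \sum_i u i * Mc i j) = 0.
    by apply: big1 => j _; rewrite Hj mulr0.
  apply: (etrans _ E); under [RHS]eq_bigr do rewrite mulrDr; rewrite big_split /=; apply: (congr2 (fun a b : C => a + b)); first by [].
  by apply: eq_bigr => j _; rewrite mulr_sumr; apply: eq_bigr => i _; rewrite mulrA.
pose s := \sum_i acoef i * u i.
have TT : T + T^* = 2 * (s * s^*).
  have Ts : T^* = \sum_j \sum_i (u j)^* * u i * Mc j i.
    rewrite /T rmorph_sum; under eq_bigr do rewrite rmorph_sum.
    rewrite exchange_big /=; apply: eq_bigr => j _; apply: eq_bigr => i _.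
    by rewrite /u !rmorphM /= !conjCK conjMc; ring.
  rewrite Ts /T -big_split /=.
  rewrite /s rmorph_sum mulr_suml mulr_sumr.
  under [RHS]eq_bigr do rewrite mulr_sumr mulr_sumr.
  rewrite [RHS]exchange_big /=.
  apply: eq_bigr => j _; rewrite -big_split /=; apply: eq_bigr => i _.
  by rewrite /u -mulrDr Msym !rmorphM /= conja; ring.
have P1 : \sum_j ((u j)^* * v 0 j + ((u j)^* * v 0 j)^*) = \sum_j (z j + (z j)^*) * (v 0 j * (v 0 j)^*).
  apply: eq_bigr => j _; rewrite /u !rmorphM /= conjCK.
  rewrite conjCK; ring.
have Z : \sum_j (z j + (z j)^*) * (v 0 j * (v 0 j)^*) + 2 * (s * s^*) = 0.
  rewrite -P1 -TT big_split /= -rmorph_sum.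
  have -> : forall a b : C, a + a^* + (b + b^*) = (a + b) + (a + b)^* by move=> a b; rewrite rmorphD addrACA.
  by rewrite S0 rmorph0 addr0.
have [j vj] : exists j, v 0 j != 0.
  apply/existsP; apply: contraNT v0 => /existsPn H; apply/eqP/matrixP => i k.
  by rewrite ord1 mxE; apply/eqP; move: (H k); rewrite negbK.
have pos : 0 < \sum_j (z j + (z j)^*) * (v 0 j * (v 0 j)^*).
  rewrite (bigD1 j) //=; apply: ltr_pwDl.
  - apply: mulr_gt0; last by rewrite mul_conjC_gt0.
    by have := Hz j; rewrite ReE; rewrite pmulr_lgt0 // invr_gt0 ltr0n.
  - apply: sumr_ge0 => i _; apply: mulr_ge0; last exact: mul_conjC_ge0.
    by have := Hz i; rewrite ReE => /ltW; rewrite pmulr_lge0 // invr_gt0 ltr0n.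
have Y0 : 0 <= 2 * (s * s^*) by rewrite mulr_ge0 ?ler0n ?mul_conjC_ge0.
by have := ltr_leD pos Y0; rewrite addr0 Z ltxx.
Qed.

Definition in_S1n (a b x : nat) : bool :=
  if (a <= b)%N then ((a <= x) && (x < b))%N else ((a <= x) || (x < b))%N.
Definition Pn (a b : nat) (e : 'I_7) : bool :=
  if (3 <= e)%N then in_S1n a b (nth 0%N e1n e) == in_S1n a b (nth 0%N e2n e)
  else in_S1n a b (nth 0%N e1n e) != in_S1n a b (nth 0%N e2n e).

Lemma check2 : all (fun a => all (fun b => has (fun e => ~~ Pn a b e) (ordl 6)) (iota 0 14)) (iota 0 14).
Proof. vm_cast_no_check (erefl true). Qed.

Lemma npo : ~ pseudo_orientable G59.
Proof.
rewrite /pseudo_orientable => -[a [b H]].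
have Ha : (a < 14)%N := ltn_ord a.
have Hb : (b < 14)%N := ltn_ord b.
have := allP check2 a; rewrite mem_iota add0n Ha => /(_ isT) /allP /(_ b).
rewrite mem_iota add0n Hb => /(_ isT) /hasP [e _]; apply/negP/negPn.
by move: (H e); rewrite /= /in_S1 /Pn /G59_ori end1E end2E.
Qed.

Theorem proposition5p9 :
  ~ pseudo_orientable G59 /\ hurwitz_stable (qt_poly G59).
Proof.
split; first exact: npo.
move=> z Hz.
have E : (qt_poly G59).@[z] = \det (\matrix_(i, j) ((i == j)%:R + z i * Mc i j)).
  rewrite detExp /qt_poly rmorph_sum /= big_mkcond /=.
  apply: eq_bigr => J _.
  rewrite rmorph_prod /=.
  have -> : \det (\matrix_(i, j) (if i \in J then Mc i j else (i == j)%:R)) = \det (leafC J) by [].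
  rewrite detleaf.
  case: (@quasi_tree G59 J); rewrite ?mulr1 ?mulr0 //.
  by apply: eq_bigr => i _; rewrite mevalXU.
rewrite E; exact: stab.
Qed.
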